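(* Let $n\ge2$ and let $F_n$ have free basis $x_1,\dots,x_n$. There exists a nontrivial cyclically reduced word $\alpha_1\in F_n$ such that the endomorphism $\phi\in\mathrm{End}(F_n)$ defined by $\phi(x_1)=\alpha_1^{-1}x_1\alpha_1$ and $\phi(x_i)=x_i$ for $i\ne1$ is not surjective. (For instance $\alpha_1=x_nx_{n-1}\cdots x_2x_1x_n^{-2}x_{n-1}^{-2}\cdots x_2^{-2}x_1^{-2}$ as chosen in the paper.)
   Context: A word is cyclically reduced if it is reduced and its first letter is not the inverse of its last letter. Together with the preceding result that such conjugating endomorphisms induce surjections on all quotients $F_n/F_n^{(k)}$ of the lower central series ($F_n^{(1)}=F_n$, $F_n^{(k+1)}=[F_n^{(k)},F_n]$), this shows surjectivity on all these nilpotent quotients does not imply surjectivity on $F_n$. *)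

(* Defs.v *)
(* The free group F_n on x_1..x_n, modelled by freely
   reduced words over the letters x_i^{+1}, x_i^{-1}. *)
From mathcomp Require Import all_boot.
Set Implicit Arguments. Unset Strict Implicit. Unset Printing Implicit Defensive.

(* A letter (i, false) is x_{i+1}, (i, true) is x_{i+1}^{-1}. *)
Definition letter (n : nat) : Type := ('I_n * bool)%type.

Definition linv n (a : letter n) : letter n := (a.1, ~~ a.2).

Definition word n := seq (letter n).

Definition reduced n (w : word n) : bool :=
  if w is a :: t then path (fun a b => b != linv a) a t else true.

Definition cyc_reduced n (w : word n) : bool :=
  reduced w && (if w is a :: t then last a t != linv a else true).

Definition push n (a : letter n) (s : word n) : word n :=
  if s is b :: t then (if b == linv a then t else a :: s) else [:: a].
Definition red n (w : word n) : word n := foldr (@push n) [::] w.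

Definition wmul n (u v : word n) : word n := red (u ++ v).
Definition winv n (w : word n) : word n := rev (map (@linv n) w).
Definition gen n (i : 'I_n) : word n := [:: (i, false)].

Definition endo n (f : 'I_n -> word n) (w : word n) : word n :=
  red (flatten [seq if a.2 then winv (f a.1) else f a.1 | a <- w]).

(* phi(x_1) = alpha^{-1} x_1 alpha, phi(x_i) = x_i for i <> 1
   (x_1 is the generator of index 0). *)
Definition conj_x1 n (alpha : word n) (i : 'I_n) : word n :=
  if val i == 0 then wmul (wmul (winv alpha) (gen i)) alpha else gen i.

Definition endo_surjective n (f : 'I_n -> word n) : Prop :=
  forall v : word n, reduced v -> exists w : word n, reduced w /\ endo f w = v.

(* Main.v *)
Require Import Defs.
From mathcomp Require Import all_boot all_fingroup.
Set Implicit Arguments. Unset Strict Implicit. Unset Printing Implicit Defensive.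
Module H.
Local Open Scope group_scope.
Definition o0 : 'I_3 := @Ordinal 3 0 isT.
Definition o1 : 'I_3 := @Ordinal 3 1 isT.
Definition o2 : 'I_3 := @Ordinal 3 2 isT.
Definition s3 : {perm 'I_3} := tperm o0 o1.
Definition t3 : {perm 'I_3} := tperm o0 o2.
Lemma tpE (x y z : 'I_3) : tperm x y z = if z == x then y else if z == y then x else z.
Proof. by rewrite permE. Qed.
Lemma conj_st : (s3 * (t3 * (s3 * 1)))^-1 * (s3 * 1) * (s3 * (t3 * (s3 * 1))) = t3.
Proof.
apply/permP => k; rewrite !mulg1 !invMg !tpermV !permM /s3 /t3.
by case: k => [[|[|[|k]]] Hk] //; apply/val_inj; rewrite !tpE.
Qed.
Lemma tt1 : t3 * t3 = 1. Proof. exact: tperm2. Qed.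
Lemma s_ne1 : s3 != 1. Proof. apply/eqP => /permP/(_ o0). rewrite perm1 tpE. done. Qed.
Lemma s_net : s3 != t3. Proof. apply/eqP => /permP/(_ o0). rewrite !tpE. done. Qed.
Section Ev.
Variable n : nat.
Variable g : 'I_n -> {perm 'I_3}.
Definition evL (a : letter n) := if a.2 then (g a.1)^-1 else g a.1.
Fixpoint ev (w : word n) : {perm 'I_3} := if w is a :: t then evL a * ev t else 1.
Lemma ev_cat u v : ev (u ++ v) = ev u * ev v.
Proof. by elim: u => [|a u IH] /=; rewrite ?mul1g // IH mulgA. Qed.
Lemma evL_inv a : evL (linv a) = (evL a)^-1.
Proof. by case: a => i [] /=; rewrite /evL /= ?invgK. Qed.
Lemma ev_push a s : ev (push a s) = evL a * ev s.
Proof.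
case: s => [|b t] /=; first by rewrite mulg1.
case: eqP => [->|_] //=.
by rewrite evL_inv mulgA mulgV mul1g.
Qed.
Lemma ev_red w : ev (red w) = ev w.
Proof. by elim: w => [|a w IH] //=; rewrite ev_push IH. Qed.
Lemma ev_winv w : ev (winv w) = (ev w)^-1.
Proof.
elim: w => [|a w IH] /=; first by rewrite invg1.
by rewrite /winv map_cons rev_cons -cats1 ev_cat -/(winv w) IH /= mulg1 evL_inv invMg.
Qed.
Lemma ev_wmul u v : ev (wmul u v) = ev u * ev v.
Proof. by rewrite /wmul ev_red ev_cat. Qed.
End Ev.

Definition P3 (p : {perm 'I_3}) := (p == 1) || (p == t3).
Lemma P3M p q : P3 p -> P3 q -> P3 (p * q).
Proof. by rewrite /P3 => /orP[]/eqP-> /orP[]/eqP->; rewrite ?mul1g ?mulg1 ?tt1 eqxx ?orbT. Qed.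
Lemma P3V p : P3 p -> P3 p^-1.
Proof. by rewrite /P3 => /orP[]/eqP->; rewrite ?invg1 ?tpermV eqxx ?orbT. Qed.

End H.
Import H.

Theorem mainTheorem13 (n : nat) (hn : 2 <= n) :
  exists alpha1 : word n,
    [/\ alpha1 != [::], cyc_reduced alpha1 &
        ~ endo_surjective (conj_x1 alpha1)].
Proof.
have h0 : 0 < n by apply: leq_trans hn.
pose i0 : 'I_n := Ordinal h0. pose i1 : 'I_n := Ordinal hn.
pose g (i : 'I_n) := if val i == 0 then s3 else if val i == 1 then t3 else 1%g.
pose alpha : word n := [:: (i0, false); (i1, false); (i0, false)].
exists alpha; split => //.
move=> /(_ (gen i0) isT) [w [_ hw]].
have Hf : forall i, P3 (ev g (conj_x1 alpha i)).
  move=> i; rewrite /conj_x1; case: ifP => Hi.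
    rewrite !ev_wmul ev_winv /= /evL /= /g Hi /=.
    by rewrite conj_st /P3 eqxx orbT.
  rewrite /= /evL /= mulg1 /g Hi; case: ifP => _; by rewrite /P3 eqxx ?orbT.
have : P3 (ev g (endo (conj_x1 alpha) w)).
  rewrite /endo ev_red; elim: w {hw} => [|a w IH] /=; first by rewrite /P3 eqxx.
  rewrite ev_cat; apply: P3M => //; case: ifP => _ //.
  by rewrite ev_winv; apply: P3V.
rewrite hw /= /evL /= mulg1 /g /= /P3.
by rewrite (negbTE s_ne1) (negbTE s_net).
Qed.
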